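(* Let $K^f$ and $K^s$ be $n_s\times n_s$ Markov chain generators. Suppose $K^f=\mathrm{diag}(K^f_1,\dots,K^f_l)$ is block diagonal, and let $K^s$ be partitioned conformally into blocks $K^s_{i,j}$, where $K^s_{i,i}=K^s_i$. Let $L$ and $\Pi$ be the matrices constructed from $K^f$ as described in the context. Then $\tilde K=LK^s\Pi$ is the generator of a Markov chain. That is, every column of $\tilde K$ sums to zero and every off-diagonal entry of $\tilde K$ is nonnegative.
   Context: A real square matrix is a Markov chain generator if all its off-diagonal entries are nonnegative and all its column sums are zero. Each block $K^f_i$ is an $m_i\times m_i$ Markov generator. It describes fast transitions among the states of the $i$-th fast component. Its directed graph has an edge $q\to p$ iff $(K^f_i)_{pq}>0$. Decompose this graph into strongly connected components, classified as follows: - absorbing: no edges leave it to another strong component; - sources: no edges enter it from another strong component, but some leave; - internal: all others. Order the states of component $i$ as follows: first the $p_i$ isolated absorbing states (absorbing strong components consisting of a single state); then the states of the $q_i$ absorbing strong components having at least two states, component by component; then states of internal strong components; then states of sources. With this ordering, $$K^f_i=\begin{pmatrix}K^{f,ab}_i&K^{f,ab,in}_i&K^{f,ab,so}_i\\0&K^{f,in}_i&K^{f,in,so}_i\\0&0&K^{f,so}_i\end{pmatrix},$$ where $K^{f,ab}_i=\mathrm{diag}(0_{p_i},K^{f,ab}_{i,1},\dots,K^{f,ab}_{i,q_i})$. Here $K^{f,ab}_{i,j}$ is the $m^{ab}_{i,j}\times m^{ab}_{i,j}$ generator restricted to the $j$-th absorbing strong component with at least two states. The blocks $K^{f,in}_i$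 and $K^{f,so}_i$ are nonsingular. Let $\pi^{ab}_{i,j}$ be the unique probability vector with $K^{f,ab}_{i,j}\pi^{ab}_{i,j}=0$. Define $$\tilde\Pi_i=\mathrm{diag}(I_{p_i},\pi^{ab}_{i,1},\dots,\pi^{ab}_{i,q_i}).$$ Let $\Pi_i$ be $\tilde\Pi_i$ augmented below by zero rows for all internal and source states, and set $\Pi=\mathrm{diag}(\Pi_1,\dots,\Pi_l)$. Define $$\tilde L_i=\mathrm{diag}(I_{p_i},\mathbf 1^T_{m^{ab}_{i,1}},\dots,\mathbf 1^T_{m^{ab}_{i,q_i}}),$$ where $\mathbf 1^T_k=[1,\dots,1]$ of length $k$. Further define $$A_i=-\tilde L_iK^{f,ab,in}_i(K^{f,in}_i)^{-1},\qquad B_i=-(\tilde L_iK^{f,ab,so}_i+A_iK^{f,in,so}_i)(K^{f,so}_i)^{-1},$$ $L_i=[\,\tilde L_i\mid A_i\mid B_i\,]$, and $L=\mathrm{diag}(L_1,\dots,L_l)$. Then $LK^f=0$ and $K^f\Pi=0$. *)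

(* Defs.v *)
From mathcomp Require Import all_boot all_order all_algebra.
Set Implicit Arguments. Unset Strict Implicit. Unset Printing Implicit Defensive.
Import Order.TTheory GRing.Theory Num.Theory.
Local Open Scope ring_scope.

Section Defs.
Variable R : realFieldType.

Definition generator (n : nat) (A : 'M[R]_n) : Prop :=
  (forall i j : 'I_n, i != j -> 0 <= A i j) /\
  (forall j : 'I_n, \sum_(i < n) A i j = 0).

Definition mxbdiag (l : nat) (p q : 'I_l -> nat)
    (B : forall i, 'M[R]_(p i, q i)) : 'M[R]_(\sum_i p i, \sum_i q i) :=
  \mxblock_(j, k) if j == k then conform_mx 0 (B j) else 0.

Section Block.
Variables (m : nat) (K : 'M[R]_m).

Definition edge : rel 'I_m := fun q p => 0 < K p q.
Definition reach : rel 'I_m := connect edge.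

Definition scc (x : 'I_m) : {set 'I_m} :=
  [set y | reach x y && reach y x].

Definition absorbing_state (x : 'I_m) : bool :=
  [forall y, forall z, ((y \in scc x) && edge y z) ==> (z \in scc x)].

Definition source_state (x : 'I_m) : bool :=
  ~~ absorbing_state x &&
  [forall y, forall z, ((z \in scc x) && edge y z) ==> (y \in scc x)].

Definition Ab : {set 'I_m} := [set x | absorbing_state x].
Definition So : {set 'I_m} := [set x | source_state x].
Definition In : {set 'I_m} :=
  [set x | ~~ absorbing_state x && ~~ source_state x].

Definition abs_classes : {set {set 'I_m}} := [set scc x | x in Ab].
Definition nred : nat := #|abs_classes|.
Definition cls (c : 'I_nred) : {set 'I_m} := enum_val c.

Definition subm (A B : {set 'I_m}) : 'M[R]_(#|A|, #|B|) :=
  \matrix_(a, b) K (enum_val a) (enum_val b).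

(* extension by zero of a matrix whose columns are indexed by A *)
Definition colext (r : nat) (A : {set 'I_m}) (M : 'M[R]_(r, #|A|))
  : 'M[R]_(r, m) := \matrix_(c, x) \sum_(a | enum_val a == x) M c a.

Definition Ltil : 'M[R]_(nred, #|Ab|) :=
  \matrix_(c, a) ((enum_val a \in cls c)%:R).

Definition Amx : 'M[R]_(nred, #|In|) :=
  - (Ltil *m subm Ab In *m invmx (subm In In)).

Definition Bmx : 'M[R]_(nred, #|So|) :=
  - ((Ltil *m subm Ab So + Amx *m subm In So) *m invmx (subm So So)).

(* L_i = [ \tilde L | A | B ] (columns in the original state order) *)
Definition Lblk : 'M[R]_(nred, m) :=
  colext Ltil + colext Amx + colext Bmx.

Definition stat_prob (C : {set 'I_m}) (v : 'I_m -> R) : Prop :=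
  [/\ forall x, x \in C -> 0 <= v x,
      \sum_(x in C) v x = 1 &
      forall y, y \in C -> \sum_(x in C) K y x * v x = 0].

Definition Piblk (pi : {set 'I_m} -> 'I_m -> R) : 'M[R]_(m, nred) :=
  \matrix_(x, c) (if x \in cls c then pi (cls c) x else 0).

End Block.
End Defs.

(* Main.v *)
Require Import Defs.
From mathcomp Require Import all_boot all_order all_algebra.
From mathcomp Require Import ring lra.
Set Implicit Arguments. Unset Strict Implicit. Unset Printing Implicit Defensive.
Import Order.TTheory GRing.Theory Num.Theory.
Local Open Scope ring_scope.

Lemma exmin (R : realFieldType) n (f : 'I_n -> R) (j : 'I_n) :
  exists k, forall k', f k <= f k'.
Proof.
case: (@arg_minP _ _ _ j predT f) => // k _ Hk.
by exists k => k'; apply: Hk.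
Qed.

Section MinPrin.
Variable R : realFieldType.

Lemma minprin n (N : 'M[R]_n) :
  (forall i j, i != j -> 0 <= N i j) ->
  (forall j, \sum_i N i j <= 0) ->
  (forall M : {set 'I_n}, (forall j, j \in M ->
      \sum_i N i j = 0 /\ forall i, 0 < N i j -> i \in M) -> M = set0) ->
  forall v : 'rV[R]_n, (forall j, (v *m N) 0 j <= 0) -> forall j, 0 <= v 0 j.
Proof.
move=> H1 H2 H3 v Hv j; rewrite leNgt; apply/negP => Hj.
have [k Hk] := exmin (fun k => v 0 k) j.
set mn := v 0 k.
have mn0 : mn < 0 by apply: le_lt_trans (Hk j) Hj.
pose M := [set i | v 0 i == mn].
have kM : k \in M by rewrite inE.
suff : M = set0 by move=> E; move: kM; rewrite E inE.
apply: H3 => i; rewrite inE => /eqP Hi.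
have E : (v *m N) 0 i = \sum_a (v 0 a - mn) * N a i + mn * \sum_a N a i.
  rewrite mxE mulr_sumr -big_split /=; apply: eq_bigr => a _.
  by rewrite mulrBl subrK.
have S1 : 0 <= \sum_a (v 0 a - mn) * N a i.
  apply: sumr_ge0 => a _; case: (eqVneq a i) => [->|ne].
    by rewrite Hi subrr mul0r.
  by apply: mulr_ge0; [rewrite subr_ge0; apply: Hk | apply: H1].
have S2 : 0 <= mn * \sum_a N a i by apply: mulr_le0; [apply: ltW | apply: H2].
have V := Hv i.
have Z1 : \sum_a (v 0 a - mn) * N a i = 0 by lra.
have Z2 : mn * \sum_a N a i = 0 by lra.
split.
  by move: Z2 => /eqP; rewrite mulf_eq0 (lt_eqF mn0)/= => /eqP.
move=> a Na; rewrite inE.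
have h : (v 0 a - mn) * N a i = 0.
  by apply: (psumr_eq0P _ Z1) => // b _; case: (eqVneq b i) => [->|ne];
    [rewrite Hi subrr mul0r | apply: mulr_ge0; [rewrite subr_ge0; apply: Hk | apply: H1]].
move: h => /eqP; by rewrite mulf_eq0 (gt_eqF Na) orbF subr_eq0.
Qed.

Lemma minprin_unit n (N : 'M[R]_n) :
  (forall i j, i != j -> 0 <= N i j) ->
  (forall j, \sum_i N i j <= 0) ->
  (forall M : {set 'I_n}, (forall j, j \in M ->
      \sum_i N i j = 0 /\ forall i, 0 < N i j -> i \in M) -> M = set0) ->
  N \in unitmx.
Proof.
move=> H1 H2 H3; rewrite unitmxE unitfE; apply/negP => /det0P [v vn0 vN].
move/negP: vn0; apply; apply/eqP/rowP => j; rewrite mxE.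
apply/le_anti/andP; split.
  rewrite -oppr_ge0.
  have h := minprin H1 H2 H3 (v := - v).
  have -> : - v 0 j = (- v) 0 j by rewrite mxE.
  by apply: h => k; rewrite mulNmx vN oppr0 mxE.
by apply: (minprin H1 H2 H3) => k; rewrite vN mxE.
Qed.
End MinPrin.

Section Block.
Variables (R : realFieldType) (m : nat) (K : 'M[R]_m).
Hypothesis HK1 : forall i j, i != j -> 0 <= K i j.
Hypothesis HK2 : forall j, \sum_i K i j = 0.

Lemma reach_trans x y z : reach K x y -> reach K y z -> reach K x z.
Proof. exact: connect_trans. Qed.

Lemma scc_refl x : x \in scc K x.
Proof. by rewrite inE /reach connect0. Qed.

Lemma scc_eq x y : y \in scc K x -> scc K y = scc K x.
Proof.
rewrite inE => /andP [xy yx]; apply/setP => z; rewrite !inE.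
apply/andP/andP => [[yz zy]|[xz zx]]; split.
- exact: reach_trans xy yz.
- exact: reach_trans zy yx.
- exact: reach_trans yx xz.
- exact: reach_trans zx xy.
Qed.

Lemma abs_eq x y : y \in scc K x -> absorbing_state K y = absorbing_state K x.
Proof. by move=> H; rewrite /absorbing_state (scc_eq H). Qed.

Lemma src_eq x y : y \in scc K x -> source_state K y = source_state K x.
Proof. by move=> H; rewrite /source_state (abs_eq H) (scc_eq H). Qed.

Lemma reach_abs x : exists2 y, reach K x y & absorbing_state K y.
Proof.
suff H : forall n x, (#|[set y | reach K x y]| <= n)%N ->
    exists2 y, reach K x y & absorbing_state K y by exact: H.
elim=> [|n IH] {}x Hx.
  have : x \in [set y | reach K x y] by rewrite inE /reach connect0.
  by move: Hx; rewrite leqn0 cards_eq0 => /eqP ->; rewrite inE.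
case Ha: (absorbing_state K x); first by exists x; rewrite // /reach connect0.
move/negbT: Ha => /forallPn [y0 /forallPn [z]].
rewrite negb_imply => /andP [/andP [Hy0 He] Hz].
have xz : reach K x z.
  move: Hy0; rewrite inE => /andP [xy0 _].
  by apply: reach_trans xy0 _; apply: connect1.
have [y zy ay] : exists2 y, reach K z y & absorbing_state K y.
  apply: IH; rewrite -ltnS; apply: leq_trans Hx; apply: proper_card.
  apply/properP; split.
    by apply/subsetP => w; rewrite !inE => zw; apply: reach_trans xz zw.
  exists x; rewrite !inE ?/reach ?connect0 //.
  by apply/negP => zx; move/negP: Hz; apply; rewrite inE xz.
by exists y => //; apply: reach_trans xz zy.
Qed.

Lemma closed_reach (A : {set 'I_m}) :
  (forall z y, z \in A -> edge K z y -> y \in A) ->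
  forall z y, z \in A -> reach K z y -> y \in A.
Proof.
move=> H z y Hz /connectP [p Hp ->].
elim: p z Hz Hp => //= a p IH z Hz /andP [e Hp].
exact: IH (H _ _ Hz e) Hp.
Qed.

Lemma part_sum (F : 'I_m -> R) :
  \sum_y F y = \sum_(y in Ab K) F y + \sum_(y in In K) F y + \sum_(y in So K) F y.
Proof.
rewrite (bigID (fun y => y \in Ab K)) /=.
rewrite (bigID (fun y => y \in So K) (fun y => y \notin Ab K)) /= -addrA.
congr (_ + _); rewrite addrC; congr (_ + _); apply: eq_bigl => y; rewrite !inE.
  by rewrite andbC.
by rewrite /source_state andbA andbb.
Qed.

Lemma In_Ab x : x \in In K -> x \notin Ab K.
Proof. by rewrite !inE => /andP []. Qed.
Lemma So_Ab x : x \in So K -> x \notin Ab K.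
Proof. by rewrite !inE => /andP []. Qed.
Lemma In_So x : x \in In K -> x \notin So K.
Proof. by rewrite !inE => /andP []. Qed.
Lemma Ab_In x : x \in Ab K -> x \notin In K.
Proof. by move=> h; apply/negP => /In_Ab; rewrite h. Qed.
Lemma Ab_So x : x \in Ab K -> x \notin So K.
Proof. by move=> h; apply/negP => /So_Ab; rewrite h. Qed.
Lemma So_In x : x \in So K -> x \notin In K.
Proof. by move=> h; apply/negP => /In_So; rewrite h. Qed.

Lemma K_So_In y x : y \in So K -> x \in In K -> K y x = 0.
Proof.
move=> yS xI.
have ne : y != x by apply/eqP => E; move: (In_So xI); rewrite -E yS.
have := HK1 ne; rewrite le0r => /orP [/eqP //|pos].
have := yS; rewrite inE => /andP [_ /forallP /(_ x) /forallP /(_ y)].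
rewrite scc_refl /= => /implyP /(_ pos) xs.
by move: (In_So xI) yS; rewrite !inE (src_eq xs) => /negbTE ->.
Qed.

Lemma subm_ge0 (A B : {set 'I_m}) a b : (forall x, x \in A -> x \notin B) -> 0 <= subm K A B a b.
Proof.
move=> H; rewrite mxE; apply: HK1; apply/eqP => E.
by have := H _ (enum_valP a); rewrite E enum_valP.
Qed.

Lemma sum_subm (A B : {set 'I_m}) b :
  \sum_(a < #|A|) subm K A B a b = \sum_(y in A) K y (enum_val b).
Proof. by rewrite [RHS](big_enum_val (A := mem A)); apply: eq_bigr => a _; rewrite mxE. Qed.

Lemma subm_hyps (S : {set 'I_m}) : (forall x, x \in S -> ~~ absorbing_state K x) ->
  [/\ (forall i j, i != j -> 0 <= subm K S S i j),
      (forall j, \sum_i subm K S S i j <= 0) &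
      (forall M : {set 'I_#|S|}, (forall j, j \in M ->
       \sum_i subm K S S i j = 0 /\ forall i, 0 < subm K S S i j -> i \in M) ->
       M = set0)].
Proof.
move=> HS.
have rest : forall x, x \in S ->
    \sum_(y in S) K y x + \sum_(y | y \notin S) K y x = 0 /\
    0 <= \sum_(y | y \notin S) K y x.
  move=> x xS; split; first by have := HK2 x; rewrite (bigID (fun y => y \in S)) /=.
  by apply: sumr_ge0 => y yS; apply: HK1; apply/eqP => E; move: yS; rewrite E xS.
split.
- by move=> i j ne; rewrite mxE; apply: HK1; rewrite (inj_eq enum_val_inj).
- move=> j; rewrite sum_subm; have [h1 h2] := rest _ (enum_valP j); lra.
move=> M HM; case: (set_0Vmem M) => [//|[a aM]]; exfalso.
have cl : forall z y, z \in enum_val @: M -> edge K z y -> y \in enum_val @: M.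
  move=> z y /imsetP [b bM ->] e.
  have [cs cl] := HM b bM.
  case yS: (y \in S).
    apply/imsetP; exists (enum_rank_in yS y); last by rewrite enum_rankK_in.
    by apply: cl; rewrite mxE enum_rankK_in.
  exfalso.
  have [h1 h2] := rest _ (enum_valP b).
  move: cs; rewrite sum_subm => cs.
  have h3 : \sum_(y | y \notin S) K y (enum_val b) = 0 by lra.
  have h4 : K y (enum_val b) = 0.
    apply: (psumr_eq0P _ h3); last by rewrite yS.
    by move=> w wS; apply: HK1; apply/eqP => E; move: wS; rewrite E enum_valP.
  by move: e; rewrite /edge h4 ltxx.
have [y xy ay] := reach_abs (enum_val a).
have : y \in enum_val @: M.
  by apply: closed_reach cl _ _ _ xy; apply/imsetP; exists a.
case/imsetP => b _ E.
by move: (HS _ (enum_valP b)); rewrite -E ay.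
Qed.


Lemma unit_sub (S : {set 'I_m}) : (forall x, x \in S -> ~~ absorbing_state K x) ->
  subm K S S \in unitmx.
Proof. by move=> HS; have [h1 h2 h3] := subm_hyps HS; apply: minprin_unit. Qed.

Lemma rows_ge0 (S : {set 'I_m}) : (forall x, x \in S -> ~~ absorbing_state K x) ->
  forall r (X : 'M[R]_(r, #|S|)), (forall c j, (X *m subm K S S) c j <= 0) ->
  forall c j, 0 <= X c j.
Proof.
move=> HS r X HX c j; have [h1 h2 h3] := subm_hyps HS.
have h := minprin h1 h2 h3 (v := row c X).
have -> : X c j = row c X 0 j by rewrite mxE.
by apply: h => k; rewrite -row_mul mxE.
Qed.

Lemma In_nabs x : x \in In K -> ~~ absorbing_state K x.
Proof. by rewrite inE => /andP []. Qed.
Lemma So_nabs x : x \in So K -> ~~ absorbing_state K x.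
Proof. by rewrite inE /source_state => /andP []. Qed.

Lemma uIn : subm K (In K) (In K) \in unitmx. Proof. exact: unit_sub In_nabs. Qed.
Lemma uSo : subm K (So K) (So K) \in unitmx. Proof. exact: unit_sub So_nabs. Qed.

Lemma mem_cls x (c : 'I_(nred K)) : x \in cls c -> cls c = scc K x /\ x \in Ab K.
Proof.
have := enum_valP c; rewrite -/(cls c) => /imsetP [y yA ->] xy.
split; first by rewrite (scc_eq xy).
by move: yA; rewrite !inE (abs_eq xy).
Qed.

Lemma cls_uniq x (c d : 'I_(nred K)) : x \in cls c -> x \in cls d -> c = d.
Proof.
move=> /mem_cls [h1 _] /mem_cls [h2 _]; apply: enum_val_inj.
by rewrite -/(cls c) -/(cls d) h1 h2.
Qed.

Lemma one_cls x : x \in Ab K -> \sum_(c < nred K) (x \in cls c)%:R = 1 :> R.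
Proof.
move=> xA.
have sA : scc K x \in abs_classes K by apply/imsetP; exists x.
pose c0 := enum_rank_in sA (scc K x).
have e0 : cls c0 = scc K x by rewrite /cls enum_rankK_in.
rewrite (bigD1 c0) //= e0 scc_refl big1 ?addr0 // => c ne.
case xc: (x \in cls c) => //.
by move: ne; rewrite (@cls_uniq x c c0) ?eqxx // e0 scc_refl.
Qed.

Lemma Ltil_ge0 c a : 0 <= Ltil K c a.
Proof. by rewrite mxE ler0n. Qed.

Lemma Ltil_sum a : \sum_c Ltil K c a = 1.
Proof.
rewrite -(one_cls (enum_valP a)); apply: eq_bigr => c _; by rewrite mxE.
Qed.

Local Notation one r := (const_mx 1 : 'rV[R]_r).

Lemma sum_one r n (M : 'M[R]_(r, n)) j : ((const_mx 1 : 'rV[R]_r) *m M) 0 j = \sum_c M c j.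
Proof. by rewrite mxE; apply: eq_bigr => c _; rewrite mxE mul1r. Qed.

Lemma one_Ltil : one _ *m Ltil K = one _.
Proof. by apply/rowP => a; rewrite sum_one Ltil_sum mxE. Qed.

Lemma one_subm (A B : {set 'I_m}) b :
  (one _ *m subm K A B) 0 b = \sum_(y in A) K y (enum_val b).
Proof. by rewrite sum_one sum_subm. Qed.

Lemma mul_ge0 r n p (X : 'M[R]_(r, n)) (Y : 'M[R]_(n, p)) :
  (forall i j, 0 <= X i j) -> (forall i j, 0 <= Y i j) -> forall i j, 0 <= (X *m Y) i j.
Proof. by move=> hX hY i j; rewrite mxE; apply: sumr_ge0 => k _; apply: mulr_ge0. Qed.

Lemma cancel_unit r n (N : 'M[R]_n) (X Y : 'M[R]_(r, n)) :
  N \in unitmx -> X *m N = Y *m N -> X = Y.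
Proof. by move=> uN E; rewrite -[X](mulmxK uN) E mulmxK. Qed.

Lemma Amx_eq : Amx K *m subm K (In K) (In K) = - (Ltil K *m subm K (Ab K) (In K)).
Proof. by rewrite /Amx mulNmx mulmxKV // uIn. Qed.

Lemma Amx_ge0 c b : 0 <= Amx K c b.
Proof.
apply: (rows_ge0 In_nabs) => {}c {}b; rewrite Amx_eq mxE oppr_le0.
apply: mul_ge0 => [*|i j]; first exact: Ltil_ge0.
by apply: subm_ge0 => x /Ab_In.
Qed.

Lemma Amx_sum b : \sum_c Amx K c b = 1.
Proof.
have -> : \sum_c Amx K c b = (one _ *m Amx K) 0 b by rewrite sum_one.
have -> : one _ *m Amx K = one _.
  apply: (cancel_unit uIn); rewrite -mulmxA Amx_eq mulmxN mulmxA one_Ltil.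
  apply/rowP => j; rewrite mxE !one_subm.
  have := HK2 (enum_val j); rewrite part_sum.
  rewrite [\sum_(y in So K) _]big1 ?addr0 => [h|y yS]; first by lra.
  by apply: K_So_In => //; apply: enum_valP.
by rewrite mxE.
Qed.

Lemma Bmx_eq : Bmx K *m subm K (So K) (So K) =
  - (Ltil K *m subm K (Ab K) (So K) + Amx K *m subm K (In K) (So K)).
Proof. by rewrite /Bmx mulNmx mulmxKV // uSo. Qed.

Lemma Bmx_ge0 c b : 0 <= Bmx K c b.
Proof.
apply: (rows_ge0 So_nabs) => {}c {}b; rewrite Bmx_eq mxE oppr_le0 mxE.
apply: addr_ge0; apply: mul_ge0 => i j.
- exact: Ltil_ge0.
- by apply: subm_ge0 => x /Ab_So.
- exact: Amx_ge0.
- by apply: subm_ge0 => x /In_So.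
Qed.

Lemma one_Amx : one _ *m Amx K = one _.
Proof. by apply/rowP => a; rewrite sum_one Amx_sum mxE. Qed.

Lemma Bmx_sum b : \sum_c Bmx K c b = 1.
Proof.
have -> : \sum_c Bmx K c b = (one _ *m Bmx K) 0 b by rewrite sum_one.
have -> : one _ *m Bmx K = one _.
  apply: (cancel_unit uSo); rewrite -mulmxA Bmx_eq mulmxN mulmxDr !mulmxA.
  rewrite one_Ltil one_Amx.
  apply/rowP => j; rewrite [LHS]mxE [X in - X]mxE !one_subm.
  have := HK2 (enum_val j); rewrite part_sum => h; lra.
by rewrite mxE.
Qed.

Lemma colext_ge0 r (A : {set 'I_m}) (M : 'M[R]_(r, #|A|)) c x :
  (forall c a, 0 <= M c a) -> 0 <= colext M c x.
Proof. by move=> h; rewrite mxE; apply: sumr_ge0. Qed.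

Lemma colext_out r (A : {set 'I_m}) (M : 'M[R]_(r, #|A|)) c x :
  x \notin A -> colext M c x = 0.
Proof.
move=> xA; rewrite mxE big1 // => a /eqP E.
by move: xA; rewrite -E enum_valP.
Qed.

Lemma colext_sum r (A : {set 'I_m}) (M : 'M[R]_(r, #|A|)) :
  (forall a, \sum_c M c a = 1) -> forall x, \sum_c colext M c x = (x \in A)%:R.
Proof.
move=> h x; under eq_bigr do rewrite mxE.
rewrite exchange_big /=.
case xA: (x \in A).
  rewrite (bigD1 (enum_rank_in xA x)) /= ?enum_rankK_in ?eqxx // h big1 ?addr0 //.
  move=> a /andP [/eqP E ne]; exfalso; move/eqP: ne; apply.
  by apply: enum_val_inj; rewrite enum_rankK_in.
rewrite big1 // => a /eqP E; by move: xA; rewrite -E enum_valP.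
Qed.

Lemma Lblk_ge0 c x : 0 <= Lblk K c x.
Proof.
rewrite !mxE; apply: addr_ge0; [apply: addr_ge0|];
  apply: sumr_ge0 => a _; [exact: Ltil_ge0|exact: Amx_ge0|exact: Bmx_ge0].
Qed.

Lemma sum_ind (P : pred 'I_m) x : \sum_(y | P y) ((y == x)%:R : R) = (P x)%:R.
Proof.
rewrite big_mkcond (bigD1 x) //= eqxx big1 ?addr0; first by case: (P x).
by move=> y ne; case: (P y) => //; rewrite (negbTE ne).
Qed.

Lemma part_ind x :
  (x \in Ab K)%:R + (x \in In K)%:R + (x \in So K)%:R = 1 :> R.
Proof.
have := part_sum (fun y => (y == x)%:R).
by rewrite (sum_ind xpredT) !(sum_ind (fun y => y \in _)).
Qed.

Lemma Lblk_sum x : \sum_c Lblk K c x = 1.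
Proof.
have E : forall c, Lblk K c x =
    colext (Ltil K) c x + colext (Amx K) c x + colext (Bmx K) c x.
  by move=> c; rewrite /Lblk [LHS]mxE [X in X + _]mxE.
under eq_bigr do rewrite E.
rewrite !big_split /= (colext_sum Ltil_sum) (colext_sum Amx_sum).
by rewrite (colext_sum Bmx_sum) part_ind.
Qed.

Lemma Lblk_cls x (c d : 'I_(nred K)) : x \in cls d -> c != d -> Lblk K c x = 0.
Proof.
move=> xd ne; have [_ xA] := mem_cls xd.
rewrite /Lblk [LHS]mxE [X in X + _]mxE (colext_out _ _ (Ab_In xA)).
rewrite (colext_out _ _ (Ab_So xA)) !addr0 mxE big1 // => a /eqP E.
rewrite mxE E; case xc: (x \in cls c) => //.
by move: ne; rewrite (cls_uniq xc xd) eqxx.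
Qed.

Variable pi : {set 'I_m} -> 'I_m -> R.
Hypothesis Hpi : forall C, C \in abs_classes K -> stat_prob K C (pi C).

Lemma Piblk_ge0 x c : 0 <= Piblk K pi x c.
Proof.
rewrite mxE; case: ifP => // xc.
by have [h _ _] := Hpi (enum_valP c); apply: h.
Qed.

Lemma LP0 x (c d : 'I_(nred K)) : c != d -> Lblk K c x * Piblk K pi x d = 0.
Proof.
move=> ne; rewrite [Piblk _ _ _ _]mxE; case: ifP => xd; last by rewrite mulr0.
by rewrite (Lblk_cls xd ne) mul0r.
Qed.

End Block.

Section Global.
Variables (R : realFieldType) (l : nat).

Lemma sum_split (p : 'I_l -> nat) (F : 'I_(\sum_i p i) -> R) :
  \sum_s F s = \sum_i \sum_(x : 'I_(p i)) F (tagnat.Rank _ x).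
Proof.
rewrite sig_big_dep /= (reindex (@tagnat.rank l p)) /=.
  by apply: eq_bigr => u _; rewrite tagnat.rankE.
exact: tagnat.rank_bij_on.
Qed.

Lemma mxbdiag_same (p q : 'I_l -> nat) (B : forall i, 'M[R]_(p i, q i)) i
  (x : 'I_(p i)) (y : 'I_(q i)) :
  mxbdiag B (tagnat.Rank _ x) (tagnat.Rank _ y) = B i x y.
Proof.
rewrite /mxbdiag /mxblock mxE /tagnat.sig1 /tagnat.sig2 /tagnat.Rank !tagnat.rankK /=.
by rewrite eqxx conform_mx_id.
Qed.

Lemma mxbdiag_diff (p q : 'I_l -> nat) (B : forall i, 'M[R]_(p i, q i)) i j
  (x : 'I_(p i)) (y : 'I_(q j)) : i != j ->
  mxbdiag B (tagnat.Rank _ x) (tagnat.Rank _ y) = 0.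
Proof.
move=> ne.
rewrite /mxbdiag /mxblock mxE /tagnat.sig1 /tagnat.sig2 /tagnat.Rank !tagnat.rankK /=.
by rewrite (negbTE ne) mxE.
Qed.

Lemma Rank_ex (p : 'I_l -> nat) (s : 'I_(\sum_i p i)) :
  exists i (x : 'I_(p i)), s = tagnat.Rank _ x.
Proof. by exists (tagnat.sig1 s), (tagnat.sig2 s); rewrite tagnat.sig2K. Qed.

Lemma Rank_eq (p : 'I_l -> nat) i (a b : 'I_(p i)) :
  (tagnat.Rank _ a == tagnat.Rank _ b) = (a == b).
Proof. by rewrite -val_eqE tagnat.eq_Rank eqxx. Qed.

Lemma mxbdiag_ge0 (p q : 'I_l -> nat) (B : forall i, 'M[R]_(p i, q i)) :
  (forall i a b, 0 <= B i a b) -> forall s t, 0 <= mxbdiag B s t.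
Proof.
move=> h s t; have [i [x ->]] := Rank_ex s; have [j [y ->]] := Rank_ex t.
case: (eqVneq i j) => [e|ne]; last by rewrite mxbdiag_diff.
by subst j; rewrite mxbdiag_same.
Qed.

Lemma final n r (Lg : 'M[R]_(r, n)) (Ks : 'M[R]_n) (P : 'M[R]_(n, r)) :
  (forall s x, 0 <= Lg s x) -> (forall x, \sum_s Lg s x = 1) ->
  (forall x t, 0 <= P x t) -> (forall s t x, s != t -> Lg s x * P x t = 0) ->
  generator Ks -> generator (Lg *m Ks *m P).
Proof.
move=> L0 L1 P0 LP [G1 G2]; split.
  move=> s t ne; rewrite mxE; apply: sumr_ge0 => y _; rewrite mxE mulr_suml.
  apply: sumr_ge0 => x _.
  case: (eqVneq x y) => [<-|nxy].
    by rewrite mulrAC (LP _ _ _ ne) mul0r.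
  by apply: mulr_ge0; [apply: mulr_ge0 => //; apply: G1|].
move=> t.
under eq_bigr do rewrite mxE.
rewrite exchange_big /=.
apply: big1 => y _; rewrite -mulr_suml.
have -> : \sum_s (Lg *m Ks) s y = 0; last by rewrite mul0r.
transitivity (\sum_x Ks x y); last exact: G2.
under eq_bigr => s _ do rewrite mxE.
rewrite exchange_big /=; apply: eq_bigr => x _; by rewrite -mulr_suml L1 mul1r.
Qed.

End Global.

Theorem theorem2 (R : realFieldType) (l : nat) (m : 'I_l -> nat)
    (Kf : forall i : 'I_l, 'M[R]_(m i)) (Ks : 'M[R]_(\sum_i m i))
    (pi : forall i : 'I_l, {set 'I_(m i)} -> 'I_(m i) -> R) :
  generator (\mxdiag_(i < l) Kf i) ->
  generator Ks ->
  (forall i (C : {set 'I_(m i)}), C \in abs_classes (Kf i) ->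
     stat_prob (Kf i) C (pi i C)) ->
  generator
    (mxbdiag (fun i => Lblk (Kf i)) *m Ks *m
     mxbdiag (fun i => Piblk (Kf i) (pi i))).
Proof.
move=> [D1 D2] HKs Hpi.
have ED : \mxdiag_(i < l) Kf i = mxbdiag Kf by [].
rewrite ED in D1 D2.
have HK1 : forall i (a b : 'I_(m i)), a != b -> 0 <= Kf i a b.
  by move=> i a b ne; rewrite -mxbdiag_same; apply: D1; rewrite Rank_eq.
have HK2 : forall i (b : 'I_(m i)), \sum_a Kf i a b = 0.
  move=> i b; have := D2 (tagnat.Rank _ b); rewrite sum_split (bigD1 i) //=.
  have -> : \sum_(k | k != i) \sum_(x : 'I_(m k)) mxbdiag Kf (tagnat.Rank _ x) (tagnat.Rank _ b) = 0.
    by apply: big1 => k ne; apply: big1 => a _; apply: mxbdiag_diff.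
  by rewrite addr0; under eq_bigr do rewrite mxbdiag_same.
apply: final => //.
- apply: mxbdiag_ge0 => i a b; exact: Lblk_ge0 (HK1 i) (HK2 i) _ _.
- move=> x; have [j [a ->]] := Rank_ex x.
  rewrite sum_split (bigD1 j) //=.
  have -> : \sum_(k | k != j) \sum_(c : 'I_(nred (Kf k)))
      mxbdiag (fun i => Lblk (Kf i)) (tagnat.Rank _ c) (tagnat.Rank _ a) = 0.
    by apply: big1 => k ne; apply: big1 => c _; apply: mxbdiag_diff.
  rewrite addr0; under eq_bigr do rewrite mxbdiag_same.
  exact: Lblk_sum (HK1 j) (HK2 j) _.
- apply: mxbdiag_ge0 => i a b; exact: Piblk_ge0 (Hpi i) _ _.
move=> s t x ne.
have [i [c Es]] := Rank_ex s; have [j [d Et]] := Rank_ex t.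
have [k [a Ex]] := Rank_ex x; subst s t x.
case: (eqVneq k i) => [eki|nki]; last by rewrite eq_sym in nki; rewrite (mxbdiag_diff _ _ _ nki) mul0r.
case: (eqVneq k j) => [ekj|nkj]; last by rewrite (mxbdiag_diff _ _ _ nkj) mulr0.
subst i j; rewrite !mxbdiag_same; apply: LP0.
by apply: contraNneq ne => ->.
Qed.
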